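(* Let $d\ge 2$ and $t\ge 1$ be integers. Let $v_1,\ldots,v_d$ be pairwise different positive real numbers and $\alpha_1,\ldots,\alpha_{t+d-1}$ pairwise different nonnegative integers, and let $V\in\mathbb{R}^{(t+d-1)\times d}$ be the matrix with entries $V_{j,i}=v_i^{\alpha_j}$. Let $n=\binom{t+d-1}{d-1}$ and let $Q\in\mathbb{R}^{n\times d}$ be the matrix whose rows are indexed by the $(d-1)$-element subsets $S\subset\{1,\ldots,t+d-1\}$ and whose columns are indexed by $i\in\{1,\ldots,d\}$, with entry $Q_{S,i}$ equal to the minor of $V$ formed by the rows in $S$ and the columns in $\{1,\ldots,d\}\setminus\{i\}$. Denote the rows of $Q$ by $Q_1,\ldots,Q_n$ and let $x\in\mathbb{R}^d$ be a vector of unknowns. Then $\{(Q_jx)^t\}_{j=1}^n$ is a basis of $\mathrm{Hom}_t(\mathbb{R}^d)$.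
   Context: $\mathrm{Hom}_t(\mathbb{R}^d)$ denotes the real vector space of homogeneous polynomials of degree $t$ in $d$ real variables (together with the zero polynomial); its dimension is $\binom{t+d-1}{d-1}$. *)

(* Defs.v *)
From HB Require Import structures.
From mathcomp Require Import all_boot all_order all_algebra.
Set Implicit Arguments. Unset Strict Implicit. Unset Printing Implicit Defensive.
Import Order.TTheory GRing.Theory Num.Theory.
Local Open Scope ring_scope.

Definition gvandermonde (R : nzRingType) (m d : nat) (v : 'I_d -> R)
  (alpha : 'I_m -> nat) : 'M[R]_(m, d) :=
  \matrix_(j < m, i < d) v i ^+ alpha j.

(* Rows beyond #|S| (never used when #|S| = d-1) are filled with 0. *)
Definition sub_rows_cols (R : nzRingType) (m d : nat) (V : 'M[R]_(m, d))
  (S : {set 'I_m}) (i : 'I_d) : 'M[R]_(d.-1) :=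
  \matrix_(k < d.-1, l < d.-1)
     match nth None (map Some (enum S)) k with
     | Some j => V j (lift i l)
     | None => 0
     end.

Definition Qentry (R : comNzRingType) (m d : nat) (V : 'M[R]_(m, d))
  (S : {set 'I_m}) (i : 'I_d) : R :=
  \det (sub_rows_cols V S i).

Definition Qpow (R : comNzRingType) (m d t : nat) (V : 'M[R]_(m, d))
  (S : {set 'I_m}) : ('I_d -> R) -> R :=
  fun x => (\sum_(i < d) Qentry V S i * x i) ^+ t.

Definition monom (R : comNzRingType) (d t : nat) (e : {ffun 'I_d -> 'I_t.+1})
  (x : 'I_d -> R) : R := \prod_(i < d) x i ^+ e i.

Definition inHom (R : comNzRingType) (d t : nat) (p : ('I_d -> R) -> R) : Prop :=
  exists c : {ffun 'I_d -> 'I_t.+1} -> R,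
    forall x, p x = \sum_(e : {ffun 'I_d -> 'I_t.+1} | (\sum_(i < d) (e i : nat) == t)%N)
                      c e * monom e x.

Definition is_basis_Hom (R : comNzRingType) (d t m k : nat)
  (f : {set 'I_m} -> ('I_d -> R) -> R) : Prop :=
  [/\ (forall S : {set 'I_m}, #|S| = k -> inHom t (f S)),
      (forall c : {set 'I_m} -> R,
         (forall x, \sum_(S : {set 'I_m} | #|S| == k) c S * f S x = 0) ->
         forall S : {set 'I_m}, #|S| = k -> c S = 0)
    & (forall p, inHom t p ->
         exists c : {set 'I_m} -> R,
           forall x, p x = \sum_(S : {set 'I_m} | #|S| == k) c S * f S x)].

(* Main.v *)
Require Import Defs.
From HB Require Import structures.
From mathcomp Require Import all_boot all_order all_algebra.
From mathcomp Require Import polyrcf ring zify.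
Import Order.TTheory GRing.Theory Num.Theory.
Local Open Scope ring_scope.


Definition lpoly {R : rcfType} (l : seq (R * nat)) : {poly R} := \sum_(p <- l) p.1 *: 'X^(p.2).

Lemma rolle_seq (R : rcfType) (p : {poly R}) (s : seq R) (x : R) :
  sorted <%R (x :: s) -> all (root p) (x :: s) ->
  exists s', [/\ size s' = size s, sorted <%R s', all (fun z => x < z) s' &
                 all (root p^`()) s'].
Proof.
elim: s x => [|y s IH] x /=.
  by move=> _ _; exists [::].
move=> /andP[xy sys] /and3P[rx ry rs].
have [s1 [sz1 so1 al1 rt1]] := IH y sys (introT andP (conj ry rs)).
have [c cin pc] := poly_rolle xy (etrans (eqP rx) (esym (eqP ry))).
move: cin; rewrite in_itv /= => /andP[xc cy].
exists (c :: s1); split => //=.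
- by rewrite sz1.
- rewrite path_sortedE; last exact: lt_trans.
  rewrite so1 andbT; apply/allP => z zs; apply: lt_trans cy _.
  exact: (allP al1).
- rewrite xc /=; apply/allP => z zs; apply: lt_trans xc _;
  apply: lt_trans cy _; exact: (allP al1).
- by rewrite /root pc eqxx rt1.
Qed.

Lemma seq_min (s : seq nat) : s != [::] -> exists2 a, a \in s & forall b, b \in s -> (a <= b)%N.
Proof.
elim: s => // x s IH _.
case: (altP (s =P [::])) => [->|sn].
  by exists x => [|b]; rewrite ?mem_seq1 ?eqxx // => /eqP->.
have [a ain amin] := IH sn.
case: (leqP x a) => xa.
  exists x; first by rewrite mem_head.
  move=> b; rewrite in_cons => /orP[/eqP->//|/amin]; exact: leq_trans.
exists a; first by rewrite in_cons ain orbT.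
move=> b; rewrite in_cons => /orP[/eqP->|/amin//]; exact: ltnW.
Qed.

Lemma desc (R : rcfType) n : forall l : seq (R * nat), (size l <= n)%N -> uniq (map snd l) ->
  lpoly l != 0 -> forall s, sorted <%R s -> all (fun z => 0 < z) s ->
  all (root (lpoly l)) s -> (size s < size l)%N.
Proof.
elim: n => [|n IH] l.
  by rewrite leqn0 size_eq0 => /eqP-> _; rewrite /lpoly big_nil eqxx.
move=> szl ul lnz [|x0 s] so pos rts.
  by case: (l) lnz => //; rewrite /lpoly big_nil eqxx.
have lnil : map snd l != [::].
  apply/eqP => h; move: lnz; have := congr1 size h; rewrite size_map /= => /size0nil ->.
  by rewrite /lpoly big_nil eqxx.
have [a ain amin] := @seq_min _ lnil.
pose P1 := lpoly [seq (p.1, p.2 - a)%N | p <- l].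
have eP : lpoly l = 'X^a * P1.
  rewrite /P1 /lpoly big_map mulr_sumr; apply: eq_big_seq => p pl /=.
  rewrite -scalerAr -exprD subnKC //; apply: amin; exact: map_f.
pose l' := [seq (p.1 * (p.2 - a)%:R, ((p.2 - a).-1)%N) | p <- l & p.2 != a].
have eD : P1^`() = lpoly l'.
  rewrite /P1 /lpoly /l' big_map big_map big_filter raddf_sum /=.
  rewrite [RHS]big_mkcond /=; apply: eq_bigr => p _.
  rewrite derivZ derivXn.
  case: (p.2 =P a) => [->|_] /=; first by rewrite subnn mulr0n scaler0.
  by rewrite -scaler_nat scalerA mulr_natr.
have cnt : count (fun p => p.2 == a) l = 1%N.
  rewrite -(count_map snd (pred1 a)) count_uniq_mem // ain //.
have szl' : size l' = (size l).-1.
  rewrite size_map size_filter -(count_predC (fun p : R * nat => p.2 == a) l) cnt.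
  by rewrite add1n.
have ul' : uniq (map snd l').
  rewrite -map_comp /=.
  have -> : [seq ((p.2 - a).-1)%N | p <- [seq p <- l | p.2 != a]] =
           [seq ((b - a).-1)%N | b <- [seq b <- map snd l | b != a]].
    by rewrite filter_map -map_comp.
  rewrite map_inj_in_uniq ?filter_uniq //.
  move=> b c; rewrite !mem_filter => /andP[ba bl] /andP[ca cl] e.
  have hb := amin _ bl; have hc := amin _ cl.
  have hb' : (a < b)%N by rewrite ltn_neqAle eq_sym ba hb.
  have hc' : (a < c)%N by rewrite ltn_neqAle eq_sym ca hc.
  move: e; rewrite -!subn1 -!subnDA => e.
  have := congr1 (fun k => k + (a + 1))%N e.
  by rewrite !subnK ?addn1.
have rP1 : all (root P1) (x0 :: s).
  apply/allP => z zs; have := allP rts z zs; rewrite /root eP hornerM hornerXn.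
  by rewrite mulf_eq0 expf_eq0 (gt_eqF (allP pos z zs)) andbF.
have [s' [sz' so' ax rt']] := @rolle_seq R P1 _ _ so rP1.
case: (altP (lpoly l' =P 0)) => [l'0|l'nz].
  exfalso; move: lnz; rewrite eP.
  have : (size P1 <= 1)%N.
    have hc : forall i, P1`_i.+1 = 0.
      move=> i; have := congr1 (fun q : {poly R} => q`_i) eD.
      rewrite l'0 coef0 coef_deriv /= => /eqP; rewrite mulrn_eq0 /= => /eqP //.
    rewrite leqNgt; apply/negP => h2.
    have : lead_coef P1 != 0 by rewrite lead_coef_eq0 -size_poly_eq0 -lt0n (ltn_trans _ h2).
    rewrite lead_coefE; move: h2; case: (size P1) => [|[|k]] // _ /=; by rewrite hc eqxx.
  move=> /size1_polyC eq1.
  have := allP rP1 x0 (mem_head _ _); rewrite /root eq1 hornerC => /eqP h.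
  have P10 : P1 = 0 by rewrite eq1 h.
  by rewrite P10 coef0 mulr0 eqxx.
have szl0 : (0 < size l)%N by case: (l) lnil.
have Hs : (size s' < size l')%N.
  apply: IH => //.
  - by rewrite szl' -ltnS (ltn_predK szl0).
  - apply/allP => z zs; have x0p : 0 < x0 by move: pos => /= /andP[].
    exact: lt_trans x0p (allP ax z zs).
  - by rewrite -eD.
by rewrite sz' szl' in Hs; rewrite /= -(ltn_predK szl0) ltnS.
Qed.

Lemma gv_det (R : rcfType) k (w : 'I_k -> R) (b : 'I_k -> nat) :
  (forall i, 0 < w i) -> injective w -> injective b ->
  \det (\matrix_(a, i) w i ^+ b a) != 0.
Proof.
move=> wpos winj binj; apply/negP => /det0P [c cnz cA].
pose l := [seq (c 0 a, b a) | a <- enum 'I_k].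
have el : lpoly l = \sum_a c 0 a *: 'X^(b a).
  by rewrite /lpoly big_map big_enum.
have ul : uniq (map snd l).
  by rewrite -map_comp map_inj_uniq ?enum_uniq.
have lnz : lpoly l != 0.
  have [a ca] : exists a, c 0 a != 0.
    apply/existsP; apply: contraNT cnz; rewrite negb_exists => /forallP h.
    by apply/eqP/rowP => a; rewrite mxE; apply/eqP; have := h a; rewrite negbK.
  apply: contraNneq ca => h0; have := congr1 (fun q : {poly R} => q`_(b a)) h0.
  rewrite el coef0 coef_sum => <-; rewrite (bigD1 a) //= coefZ coefXn eqxx mulr1.
  rewrite big1 ?addr0 // => a' na; rewrite coefZ coefXn.
  by rewrite (inj_eq binj) eq_sym (negbTE na) mulr0.
pose s := sort <=%O [seq w i | i <- enum 'I_k].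
have := @desc R (size l) l (leqnn _) ul lnz s.
rewrite size_sort size_map /l size_map size_map -enumT size_enum_ord ltnn => H; suff: false by []; apply: H.
- rewrite lt_sorted_uniq_le sort_uniq sort_le_sorted andbT.
  by rewrite map_inj_uniq ?enum_uniq.
- by apply/allP => z; rewrite mem_sort => /mapP[i _ ->].
- apply/allP => z; rewrite mem_sort => /mapP[i _ ->].
  rewrite /root el horner_sum.
  have h := congr1 (fun M : 'rV[R]_k => M 0 i) cA; rewrite /= !mxE in h.
  apply/eqP; rewrite -[RHS]h.
  by apply: eq_bigr => a _; rewrite hornerZ hornerXn mxE.
Qed.



Fixpoint Phi (R : comNzRingType) (d : nat) (ws : seq ('I_d -> R)) (f : ('I_d -> R) -> R) : R :=
  match ws with
  | [::] => f (fun _ => 0)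
  | w :: ws' => Phi R d ws' (fun x => f (fun i => x i + w i)) - Phi R d ws' f
  end.
Arguments Phi {R d}.

Lemma Phi_ext {R : comNzRingType} {d : nat} (ws : seq ('I_d -> R)) (f g : ('I_d -> R) -> R) : (forall x, f x = g x) -> Phi ws f = Phi ws g.
Proof.
elim: ws f g => [|w ws IH] f g e /=; first exact: e.
by rewrite (IH _ (fun x => g (fun i => x i + w i))) // (IH f g).
Qed.

Lemma Phi_lin {R : comNzRingType} {d : nat} (I : Type) (r : seq I) (P : pred I) (c : I -> R) (F : I -> ('I_d -> R) -> R) (ws : seq ('I_d -> R)) :
  Phi ws (fun x => \sum_(S <- r | P S) c S * F S x) =
  \sum_(S <- r | P S) c S * Phi ws (F S).
Proof.
elim: ws F => [|w ws IH] F //=.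
rewrite (IH (fun S x => F S (fun i => x i + w i))) IH -sumrB.
by apply: eq_bigr => S _; rewrite mulrBr.
Qed.

Lemma Phi_pow {R : comNzRingType} {d : nat} (l : ('I_d -> R) -> R)
  (ladd : forall x w, l (fun i => x i + w i) = l x + l w) ws N :
  (N <= size ws)%N ->
  Phi ws (fun x => l x ^+ N) =
  if N == size ws then (size ws)`!%:R * \prod_(w <- ws) l w else 0.
Proof.
elim: ws N => [|w ws IH] N /=.
  by rewrite leqn0 => /eqP->; rewrite expr0 big_nil mulr1.
move=> hN.
rewrite (Phi_ext ws _ (fun x => \sum_(i < N.+1) ((l w) ^+ (N - i) *+ 'C(N, i)) * l x ^+ i)); last first.
  move=> x; rewrite ladd addrC exprDn; apply: eq_bigr => i _.
  by rewrite mulrnAl.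
rewrite (@Phi_lin _ _ _ (index_enum _) xpredT (fun i : 'I_N.+1 => (l w) ^+ (N - i) *+ 'C(N, i))
            (fun i : 'I_N.+1 => fun x => l x ^+ i) ws).
rewrite big_ord_recr /= subnn expr0 binn mulr1n mul1r addrK.
have h : forall i : 'I_N, Phi ws (fun x => l x ^+ i) =
    if (i == size ws :> nat) then (size ws)`!%:R * \prod_(w <- ws) l w else 0.
  move=> i; apply: IH; rewrite -ltnS; exact: leq_trans (ltn_ord i) hN.
under eq_bigr => i _ do rewrite h.
case: (ltnP N (size ws).+1) => hN'.
  rewrite (ltn_eqF hN') big1 // => i _.
  by rewrite (ltn_eqF (leq_trans (ltn_ord i) hN')) mulr0.
have eN : N = (size ws).+1 by apply/eqP; rewrite eqn_leq hN hN'.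
subst N; rewrite eqxx big_ord_recr /= eqxx big1 ?add0r; last first.
  by move=> i _; rewrite (ltn_eqF (ltn_ord i)) mulr0.
rewrite subSnn expr1 binSn factS natrM big_cons -mulr_natl.
ring.
Qed.


Definition cnt (d t : nat) (f : {ffun 'I_t -> 'I_d}) : {ffun 'I_d -> 'I_t.+1} :=
  [ffun i => inord #|[set k | f k == i]|].
Arguments cnt {d t}.

Definition mcoef (R : comNzRingType) (d t : nat) (a : 'I_d -> R)
  (e : {ffun 'I_d -> 'I_t.+1}) : R :=
  \sum_(f : {ffun 'I_t -> 'I_d} | cnt f == e) \prod_k a (f k).
Arguments mcoef {R d t}.

Lemma cnt_val d t (f : {ffun 'I_t -> 'I_d}) i : (cnt f i : nat) = #|[set k | f k == i]|.
Proof.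
rewrite ffunE inordK // ltnS; apply: leq_trans (max_card _) _; by rewrite card_ord.
Qed.

Lemma cnt_sum d t (f : {ffun 'I_t -> 'I_d}) : (\sum_i (cnt f i : nat) = t)%N.
Proof.
under eq_bigr => i _ do rewrite cnt_val -sum1_card.
rewrite -[X in _ = X]card_ord -sum1_card (partition_big (fun k => f k) xpredT) //.
by apply: eq_bigr => i _; apply: eq_bigl => k; rewrite inE.
Qed.

Lemma monom_cnt (R : comNzRingType) d t (f : {ffun 'I_t -> 'I_d}) (x : 'I_d -> R) :
  monom (cnt f) x = \prod_k x (f k).
Proof.
rewrite /monom.
have E : forall i, x i ^+ (cnt f i) = \prod_(k in [set k | f k == i]) x i by move=> i; rewrite prodr_const cnt_val.
rewrite (eq_bigr (fun i => \prod_(k in [set k | f k == i]) x i)); last by move=> i _; rewrite E.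
rewrite [RHS](partition_big (fun k => f k) xpredT) //.
apply: eq_bigr => i _; apply: eq_big => [k|k]; first by rewrite inE.
by rewrite inE => /eqP->.
Qed.

Lemma expand (R : comNzRingType) d t (a x : 'I_d -> R) :
  (\sum_i a i * x i) ^+ t =
  \sum_(e : {ffun 'I_d -> 'I_t.+1} | (\sum_(i < d) (e i : nat) == t)%N) mcoef a e * monom e x.
Proof.
have -> : (\sum_i a i * x i) ^+ t = \prod_(k < t) \sum_i a i * x i.
  by rewrite prodr_const card_ord.
rewrite bigA_distr_bigA /=.
rewrite (partition_big (fun f => cnt f) (fun e : {ffun 'I_d -> 'I_t.+1} => (\sum_(i < d) (e i : nat) == t)%N)); last first.
  by move=> f _; rewrite cnt_sum.
apply: eq_bigr => e _; rewrite /mcoef mulr_suml; apply: eq_bigr => f /eqP <-.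
by rewrite monom_cnt big_split.
Qed.

Lemma Qpow_inHom (R : comNzRingType) m d t (V : 'M[R]_(m, d)) S : inHom t (Qpow t V S).
Proof. by exists (mcoef (Qentry V S)) => x; rewrite /Qpow expand. Qed.


Lemma sum_count_mem (T : finType) (s : seq T) : \sum_(i : T) count_mem i s = size s.
Proof.
elim: s => [|a s IH] /=; first by rewrite big1.
rewrite big_split /= IH (bigD1 a) //= eqxx big1 // => i /negbTE.
by rewrite eq_sym => ->.
Qed.

Lemma card_exps (n t : nat) :
  #|[set e : {ffun 'I_n.+1 -> 'I_t.+1} | \sum_(i < n.+1) (e i : nat) == t]| = 'C(t + n, t).
Proof.
rewrite -card_sorted_tuples.
pose g (s : t.-tuple 'I_n.+1) : {ffun 'I_n.+1 -> 'I_t.+1} := [ffun i => inord (count_mem i s)].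
have gval s i : (g s i : nat) = count_mem i s.
  rewrite ffunE inordK // ltnS; apply: leq_trans (count_size _ _) _; by rewrite size_tuple.
have -> : [set e : {ffun 'I_n.+1 -> 'I_t.+1} | \sum_(i < n.+1) (e i : nat) == t] =
          g @: [set s : t.-tuple 'I_n.+1 | sorted leq (map val s)].
  apply/setP => e; rewrite inE; apply/idP/imsetP.
  - move=> /eqP hs.
    pose s0 := sort (relpre val leq) (flatten [seq nseq (e i) i | i <- enum 'I_n.+1]).
    have cs i : count_mem i s0 = e i.
      rewrite /s0 (permP (permEl (perm_sort _ _))) count_flatten -map_comp sumnE big_map.
      rewrite big_enum /= (bigD1 i) //= count_nseq /= eqxx mul1n big1 ?addn0 //.
      by move=> j /negbTE; rewrite count_nseq /= eq_sym => ->.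
    have sz : size s0 == t.
      by rewrite -sum_count_mem -hs; apply/eqP; apply: eq_bigr => i _; rewrite cs.
    exists (Tuple sz).
      rewrite inE /= sorted_map; apply: sort_sorted => a b /=; exact: leq_total.
    by apply/ffunP => i; apply/val_inj => /=; rewrite gval /= cs.
  - move=> [s _ ->]; apply/eqP; rewrite -[RHS](size_tuple s) -sum_count_mem.
    by apply: eq_bigr => i _; rewrite gval.
rewrite card_in_imset // => s1 s2; rewrite !inE => so1 so2 e12.
apply: val_inj; apply: (inj_map val_inj); apply: (sorted_eq leq_trans anti_leq) => //.
apply: perm_map; apply/allP => x _; apply/eqP.
by rewrite -!gval e12.
Qed.


Definition Dmat (R : comNzRingType) m k (V : 'M[R]_(m, k.+2)) (S : {set 'I_m}) (j : 'I_m) :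
  'M[R]_k.+2 := \matrix_(a, i) V (nth j (enum S) a) i.
Arguments Dmat {R m k}.

Lemma key (R : comNzRingType) m k (V : 'M[R]_(m, k.+2)) (S : {set 'I_m}) (j : 'I_m) :
  #|S| = k.+1 ->
  \sum_i Qentry V S i * ((-1) ^+ i * V j i) = (-1) ^+ k.+1 * \det (Dmat V S j).
Proof.
move=> hS.
rewrite (expand_det_row _ ord_max) mulr_sumr; apply: eq_bigr => i _.
rewrite /cofactor !mxE.
have -> : nth j (enum S) (@ord_max k.+1) = j by rewrite nth_default // -cardE hS.
have -> : row' ord_max (col' i (Dmat V S j)) = sub_rows_cols V S i.
  apply/matrixP => a l; rewrite !mxE lift_max (nth_map j) //.
  by rewrite -cardE hS.
have hs : (-1) ^+ k.+1 * (-1) ^+ k.+1 = 1 :> R by rewrite -exprD addnn -signr_odd odd_double.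
rewrite /Qentry /= exprD.
transitivity (((-1) ^+ k.+1 * (-1) ^+ k.+1) * (\det (sub_rows_cols V S i) * ((-1) ^+ i * V j i)));
  first by rewrite hs mul1r.
ring.
Qed.

Lemma Dmat_in (R : comNzRingType) m k (V : 'M[R]_(m, k.+2)) (S : {set 'I_m}) (j : 'I_m) :
  #|S| = k.+1 -> j \in S -> \det (Dmat V S j) = 0.
Proof.
move=> hS jS.
have hi : (index j (enum S) < k.+2)%N.
  by rewrite ltnS ltnW // -hS cardE index_mem mem_enum.
have hi' : (index j (enum S) < k.+1)%N by rewrite -hS cardE index_mem mem_enum.
apply: (@determinant_alternate _ _ _ (Ordinal hi) ord_max).
  by rewrite -val_eqE /= neq_ltn hi'.
move=> i; rewrite !mxE /= nth_index ?mem_enum // nth_default //.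
by rewrite -cardE hS.
Qed.

Lemma Dmat_inj m k (S : {set 'I_m}) (j : 'I_m) :
  #|S| = k.+1 -> j \notin S -> injective (fun a : 'I_k.+2 => nth j (enum S) a).
Proof.
move=> hS jS a b /= e.
have sz : size (enum S) = k.+1 by rewrite -cardE.
have hlt : forall c : 'I_k.+2, (c < k.+1)%N -> nth j (enum S) c \in S.
  by move=> c hc; rewrite -mem_enum mem_nth // sz.
have hge : forall c : 'I_k.+2, ~~ (c < k.+1)%N -> nth j (enum S) c = j.
  by move=> c hc; rewrite nth_default // sz leqNgt.
apply: val_inj => /=.
case: (ltnP a k.+1) => ha; case: (ltnP b k.+1) => hb.
- by apply/eqP; rewrite -(nth_uniq j (s:=enum S)) ?sz ?enum_uniq // e.
- by move: (hlt a ha); rewrite e hge ?(negbTE jS) // -leqNgt.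
- by move: (hlt b hb); rewrite -e hge ?(negbTE jS) // -leqNgt.
- by have := ltn_ord a; have := ltn_ord b; lia.
Qed.

Lemma Phi0 (R : comNzRingType) d ws : Phi ws (fun _ : 'I_d -> R => 0) = 0.
Proof. by elim: ws => //= w ws ->; rewrite subr0. Qed.

Definition lS (R : comNzRingType) m d (V : 'M[R]_(m, d)) (S : {set 'I_m}) (x : 'I_d -> R) : R :=
  \sum_i Qentry V S i * x i.
Arguments lS {R m d}.

Lemma indep (R : rcfType) m k t (V : 'M[R]_(m, k.+2)) (hm : m = (t + k.+1)%N)
  (hdet : forall r : 'I_k.+2 -> 'I_m, injective r -> \det (\matrix_(a, i) V (r a) i) != 0)
  (c : {set 'I_m} -> R) :
  (forall x, \sum_(S : {set 'I_m} | #|S| == k.+1) c S * Qpow t V S x = 0) ->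
  forall T : {set 'I_m}, #|T| = k.+1 -> c T = 0.
Proof.
move=> h T hT.
pose w (j : 'I_m) := fun i : 'I_k.+2 => (-1) ^+ i * V j i.
pose ws := [seq w j | j <- enum (~: T)].
have szws : size ws = t.
  rewrite size_map -cardE.
  have := cardsC T; rewrite card_ord hT => e; apply/eqP.
  by rewrite -(eqn_add2l k.+1) e; apply/eqP; rewrite addnC.
have ladd S x y : lS V S (fun i => x i + y i) = lS V S x + lS V S y.
  by rewrite /lS -big_split; apply: eq_bigr => i _; rewrite mulrDr.
have hP S : Phi ws (Qpow t V S) = t`!%:R * \prod_(j <- enum (~: T)) lS V S (w j).
  have := Phi_pow (lS V S) (ladd S) ws t; rewrite szws leqnn eqxx big_map => H.
  by rewrite -H.
have lw (S : {set 'I_m}) (j : 'I_m) : #|S| = k.+1 -> lS V S (w j) = (-1) ^+ k.+1 * \det (Dmat V S j).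
  by move=> hS; rewrite /lS key.
have := Phi_ext ws _ _ h; rewrite Phi0.
rewrite (Phi_lin _ (index_enum _) (fun S : {set 'I_m} => #|S| == k.+1) c (fun S => Qpow t V S) ws).
under eq_bigr => S _ do rewrite hP.
rewrite (bigD1 T) ?hT //= [X in _ + X]big1 ?addr0; last first.
  move=> S /andP[/eqP hS nST].
  have : ~~ (S \subset T).
    by apply: contra nST => sub; rewrite eqEcard sub hS hT leqnn.
  case/subsetPn => j jS jT.
  rewrite (big_rem j) /=; last by rewrite mem_enum inE.
  by rewrite lw // Dmat_in // !(mulr0, mul0r).
move=> /eqP; rewrite !mulf_eq0 pnatr_eq0 (negbTE (lt0n_neq0 (fact_gt0 t))) /=.
case/orP => [/eqP //|]; rewrite prodf_seq_eq0 => /hasP[j jin /= /eqP].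
rewrite lw // => /eqP; rewrite mulf_eq0 signr_eq0 /= => /eqP hd; exfalso.
have jT : j \notin T by move: jin; rewrite mem_enum inE.
by move: (hdet _ (@Dmat_inj m k T j hT jT)); rewrite -/(Dmat V T j) hd eqxx.
Qed.

Lemma main_gen (R : rcfType) m k t (V : 'M[R]_(m, k.+2)) (hm : m = (t + k.+1)%N)
  (hdet : forall r : 'I_k.+2 -> 'I_m, injective r -> \det (\matrix_(a, i) V (r a) i) != 0) :
  is_basis_Hom t k.+1 (fun S => Qpow t V S).
Proof.
split.
- move=> S _; exact: Qpow_inHom.
- exact: (@indep R m k t V hm hdet).
move=> p [cp hp].
pose A := [set S : {set 'I_m} | #|S| == k.+1].
pose E := [set e : {ffun 'I_k.+2 -> 'I_t.+1} | \sum_(i < k.+2) (e i : nat) == t].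
have cardAE : #|A| = #|E|.
  rewrite /A /E card_draws card_ord card_exps hm.
  have e : k.+1 = (t + k.+1 - t)%N by rewrite addKn.
  by rewrite {2}e bin_sub // leq_addr.
pose M : 'M[R]_(#|A|, #|E|) := \matrix_(a, b) mcoef (Qentry V (enum_val a)) (enum_val b).
pose cz (z : 'rV[R]_#|A|) (S : {set 'I_m}) := \sum_(a | enum_val a == S) z 0 a.
have FUN : forall z x, \sum_(S : {set 'I_m} | #|S| == k.+1) cz z S * Qpow t V S x =
    \sum_(b < #|E|) (z *m M) 0 b * monom (enum_val b) x.
  move=> z x.
  transitivity (\sum_(a < #|A|) z 0 a * Qpow t V (enum_val a) x).
    rewrite (partition_big (fun a => enum_val a) (fun S : {set 'I_m} => #|S| == k.+1)) /=; last first.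
      by move=> a _; have := enum_valP a; rewrite inE.
    apply: eq_bigr => S _; rewrite /cz mulr_suml; apply: eq_bigr => a /eqP -> //.
  have hq a : Qpow t V (enum_val a) x = \sum_(b < #|E|) M a b * monom (enum_val b) x.
    rewrite /Qpow expand (eq_bigl (fun e => e \in E)); last by move=> e; rewrite inE.
    by rewrite big_enum_val; apply: eq_bigr => b _; rewrite mxE.
  under eq_bigr => a _ do rewrite hq mulr_sumr.
  rewrite exchange_big; apply: eq_bigr => b _; rewrite mxE mulr_suml.
  by apply: eq_bigr => a _; rewrite mulrA.
have czE z a : cz z (enum_val a) = z 0 a.
  rewrite /cz (big_pred1 a) // => a'; apply/eqP/eqP => [/enum_val_inj|->] //.
have rfree : row_free M.
  rewrite -kermx_eq0; apply/eqP/row_matrixP => r; rewrite row0.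
  set z := row r (kermx M).
  have zM : z *m M = 0 by apply/sub_kermxP; exact: row_sub.
  apply/rowP => a; rewrite [X in _ = X]mxE -(czE z a).
  apply: (@indep R m k t V hm hdet (cz z)).
    move=> x; rewrite FUN zM big1 // => b _; by rewrite mxE mul0r.
  by have := enum_valP a; rewrite inE => /eqP.
have rfull : row_full M by rewrite /row_full; move: rfree; rewrite /row_free => /eqP ->; rewrite cardAE.
case/row_fullP: rfull => B hB.
pose u : 'rV[R]_#|E| := \row_b cp (enum_val b).
exists (cz (u *m B)) => x.
rewrite FUN -mulmxA hB mulmx1 hp (eq_bigl (fun e => e \in E)); last by move=> e; rewrite inE.
by rewrite big_enum_val; apply: eq_bigr => b _; rewrite mxE.
Qed.

Theorem mainTheorem2 (R : rcfType) (d t : nat) (hd : (2 <= d)%N) (ht : (1 <= t)%N)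
  (v : 'I_d -> R) (alpha : 'I_(t + d - 1) -> nat)
  (hvpos : forall i, 0 < v i) (hvinj : injective v) (halpha : injective alpha) :
  is_basis_Hom t d.-1 (fun S => Qpow t (gvandermonde v alpha) S).
Proof.
case: d hd v alpha hvpos hvinj halpha => [|[|k]] // _ v alpha hvpos hvinj halpha.
apply: main_gen.
- by rewrite addnS subn1.
- move=> r rinj.
  have -> : \matrix_(a, i) gvandermonde v alpha (r a) i = \matrix_(a, i) v i ^+ (alpha \o r) a.
    by apply/matrixP => a i; rewrite !mxE.
  apply: (@gv_det R) => //; exact: inj_comp.
Qed.
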